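(* Let $\mathbb{F}_q$ be a finite field and let $s,t\ge1$ be coprime integers. Then the linear code $C=\bigoplus_{i=1}^{s}\mathrm{Rep}_t(\mathbb{F}_q)\le\mathbb{F}_q^{st}$ is a cyclic group code.
   Context: $\mathrm{Rep}_t(\mathbb{F}_q)=\{(\lambda,\dots,\lambda):\lambda\in\mathbb{F}_q\}\le\mathbb{F}_q^t$ is the repetition code; the direct sum consists of concatenations of $s$ constant blocks of length $t$. Let $\mathcal{B}=\{e_1,\dots,e_n\}$ be the standard basis of $\mathbb{F}_q^n$. For a finite group $H$ of order $n$, a linear code $C\le\mathbb{F}_q^n$ is an $H$-code if there exists a bijection $\phi:\mathcal{B}\to H$ whose $\mathbb{F}_q$-linear extension $\tilde\phi:\mathbb{F}_q^n\to\mathbb{F}_q[H]$ maps $C$ onto a two-sided ideal of $\mathbb{F}_q[H]$. $C$ is a cyclic group code if it is an $H$-code for some cyclic group $H$. *)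

(* Defs.v *)
From HB Require Import structures.
From mathcomp Require Import all_boot all_order all_algebra all_fingroup all_solvable all_field.
Set Implicit Arguments. Unset Strict Implicit. Unset Printing Implicit Defensive.
Import GRing.Theory.
Local Open Scope ring_scope.

(* The group algebra F[H] is modelled as {ffun gT -> F} with pointwise
   addition/scaling and convolution product. *)
Definition galg_mul (F : fieldType) (gT : finGroupType)
  (a b : {ffun gT -> F}) : {ffun gT -> F} :=
  [ffun g => \sum_(h : gT) a h * b (h^-1 * g)%g].

Definition two_sided_ideal (F : fieldType) (gT : finGroupType)
  (I : {ffun gT -> F} -> Prop) : Prop :=
  I 0 /\
  (forall x y, I x -> I y -> I (x + y)) /\
  (forall x, I x -> I (- x)) /\
  (forall (c : F) x, I x -> I [ffun g => c * x g]) /\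
  (forall a x, I x -> I (galg_mul a x)) /\
  (forall a x, I x -> I (galg_mul x a)).

(* F_q-linear extension of the bijection e_i |-> phi i on the standard basis. *)
Definition lin_ext (F : fieldType) (gT : finGroupType) (n : nat)
  (phi : 'I_n -> gT) (c : 'rV[F]_n) : {ffun gT -> F} :=
  [ffun g => \sum_(i < n) c 0 i * (phi i == g)%:R].

(* C is an H-code, H being the whole group gT (of order n via the bijection). *)
Definition is_group_code (F : fieldType) (gT : finGroupType) (n : nat)
  (C : 'rV[F]_n -> Prop) : Prop :=
  exists phi : 'I_n -> gT, bijective phi /\
    two_sided_ideal (fun a => exists c, C c /\ a = lin_ext phi c).

Definition is_cyclic_group_code (F : fieldType) (n : nat)
  (C : 'rV[F]_n -> Prop) : Prop :=
  exists gT : finGroupType, cyclic [set: gT] /\ is_group_code gT C.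

(* Direct sum of s copies of Rep_t(F): concatenations of s constant blocks
   of length t; block k consists of the indices i with i %/ t = k. *)
Definition rep_sum_code (F : fieldType) (s t : nat) : 'rV[F]_(s * t) -> Prop :=
  fun c => exists lam : nat -> F, forall i : 'I_(s * t), c 0 i = lam (i %/ t)%N.

(* Main.v *)
Require Import Defs.
From mathcomp Require Import all_boot all_order all_algebra all_fingroup all_solvable all_field.

Set Implicit Arguments. Unset Strict Implicit. Unset Printing Implicit Defensive.
Import GRing.Theory.
Local Open Scope ring_scope.

Lemma galg_mulC (F : fieldType) (gT : finGroupType) (a x : {ffun gT -> F}) :
  abelian [set: gT] -> galg_mul x a = galg_mul a x.
Proof.
move=> ab; apply/ffunP => g; rewrite !ffunE.
rewrite (reindex_inj (inj_comp (mulgI g) (@invg_inj gT))) /=.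
apply: eq_bigr => k _.
have cm : forall u v : gT, commute u v.
  by move=> u v; apply: (centsP ab); rewrite inE.
rewrite GRing.mulrC; congr (GRing.mul _ _); first by rewrite invMg invgK -mulgA mulVg mulg1.
by rewrite cm.
Qed.

Lemma lin_ext_E (F : fieldType) (gT : finGroupType) (n : nat)
  (phi : 'I_n -> gT) (psi : gT -> 'I_n) (c : 'rV[F]_n) :
  cancel phi psi -> cancel psi phi ->
  forall g, lin_ext phi c g = c 0 (psi g).
Proof.
move=> phiK psiK g; rewrite ffunE (bigD1 (psi g)) //= psiK eqxx mulr1.
rewrite big1 ?addr0 // => i ne.
suff -> : (phi i == g) = false by rewrite mulr0.
apply/negbTE; apply: contra ne => /eqP <-; by rewrite phiK.
Qed.

Local Close Scope ring_scope.
Theorem corollary2p1 (F : finFieldType) (s t : nat) :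
  (0 < s)%N -> (0 < t)%N -> coprime s t ->
  is_cyclic_group_code (@rep_sum_code F s t).
Proof.
move=> s0 t0 cst.
have [m hm] : exists m, (s * t = m.+1)%N.
  by exists (s * t).-1; rewrite prednK // muln_gt0 s0 t0.
have sdv : (s %| m.+1)%N by rewrite -hm dvdn_mulr.
have psiP : forall g : 'I_m.+1, ((g %% s) * t + g %% t < s * t)%N.
  move=> g; have h1 : (g %% s < s)%N by rewrite ltn_mod.
  have h2 : (g %% t < t)%N by rewrite ltn_mod.
  have : (g %% s).+1 * t <= s * t by rewrite leq_mul2r h1 orbT.
  rewrite mulSn => h; apply: leq_trans h; by rewrite addnC ltn_add2r.
pose psi (g : 'I_m.+1) : 'I_(s * t) := Ordinal (psiP g).
have psi_div : forall g, (psi g %/ t = g %% s)%N.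
  by move=> g; rewrite /= divnMDl // divn_small ?addn0 // ltn_mod.
have psi_inj : injective psi.
  move=> g g' /(congr1 val) /= e.
  have e1 : (g %% s = g' %% s)%N.
    by rewrite -(psi_div g) -(psi_div g') /= e.
  have e2 : (g %% t = g' %% t)%N.
    by move: (congr1 (modn^~ t) e); rewrite !modnMDl !modn_mod.
  have : (g == g' %[mod s * t]) by rewrite chinese_remainder // e1 e2 !eqxx.
  by rewrite hm !modn_small // => /eqP ?; apply: val_inj.
have psi_bij : bijective psi by apply: (inj_card_bij psi_inj); rewrite !card_ord hm.
case: psi_bij => phi psiK phiK.
exists ('I_m.+1 : finGroupType); split.
  by rewrite Zp_cycle cycle_cyclic.
exists phi; split; first by exists psi.
pose Q (a : {ffun 'I_m.+1 -> F}) :=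
  forall g g' : 'I_m.+1, (g %% s = g' %% s)%N -> a g = a g'.
have IQ : forall a, (exists c, rep_sum_code c /\ a = lin_ext phi c) <-> Q a.
  move=> a; split.
    case=> c [[lam hl] ->] g g' e.
    rewrite !(lin_ext_E c phiK psiK) !hl; congr lam; move: (psi_div g) (psi_div g') => /= -> ->; exact: e.
  move=> Qa.
  exists ((\row_i a (phi i))%R); split.
    exists (fun k => a (inZp k)) => i; rewrite mxE; apply: Qa.
    rewrite /= modn_dvdm //; have := psi_div (phi i); rewrite phiK => ->; by rewrite modn_mod.
  apply/ffunP => g; rewrite (lin_ext_E _ phiK psiK) mxE psiK //.
have Qmul : forall a x, Q x -> Q (galg_mul a x).
  move=> a x Qx g g' e; rewrite !ffunE; apply: eq_bigr => h _; congr (GRing.mul _ _).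
  apply: Qx.
  change (((h^-1)%g + g) %% m.+1 %% s = ((h^-1)%g + g') %% m.+1 %% s)%N.
  by rewrite !modn_dvdm // -modnDmr e modnDmr.
have ab := Zp_abelian m.
split; first by apply/IQ => g g' _; rewrite !ffunE.
split; first by move=> x y /IQ Qx /IQ Qy; apply/IQ => g g' e; rewrite !ffunE (Qx g g') ?(Qy g g').
split; first by move=> x /IQ Qx; apply/IQ => g g' e; rewrite !ffunE (Qx g g').
split; first by move=> c x /IQ Qx; apply/IQ => g g' e; rewrite !ffunE (Qx g g').
split; first by move=> b x /IQ Qx; apply/IQ; apply: Qmul.
by move=> b x /IQ Qx; apply/IQ; rewrite galg_mulC //; apply: Qmul.
Qed.
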